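(* Let $A\in\mathbb{R}^{n\times n}$ be Hurwitz, let $B_u\in\mathbb{R}^{n\times l}$ and $S_\eta\in\mathbb{R}^{n\times n_\eta}$ be given, and let $\bar\gamma>0$ be a given scalar. Let data samples $d_i=\begin{bmatrix}\hat x_i^\top & u_i^\top & \hat\eta_i^\top\end{bmatrix}^\top$, $i=1,\dots,N$, with $\hat x_i\in\mathbb{R}^n$, $u_i\in\mathbb{R}^l$, $\hat\eta_i\in\mathbb{R}^{n_\eta}$, be given and let $D=\sum_{i=1}^N d_id_i^\top$. Consider the convex program in the variables $Q=Q^\top\in\mathbb{R}^{n\times n}$, $\Theta_l\in\mathbb{R}^{n_\eta\times n}$, $B_l\in\mathbb{R}^{n_\eta\times l}$, $W=W^\top\in\mathbb{R}^{n_\eta\times n_\eta}$: $$\min\ \operatorname{tr}(W)\quad\text{s.t.}\quad \begin{bmatrix}AQ+QA^\top & S_\eta\Theta_l+\bar\gamma Q\\ \star & -2\bar\gamma I\end{bmatrix}\prec 0,\qquad \operatorname{tr}(TDT^\top)\le\operatorname{tr}(W),\qquad Q\succ 0,$$ where $T:=\begin{bmatrix}\Theta_l & B_l & -I_{n_\eta}\end{bmatrix}$. Let $(Q^\star,\Theta_l^\star,B_l^\star,W^\star)$ be an optimizer. Set $S_{\eta_l}=S_\eta$, $\Theta_l=\Theta_l^\star$, $B_l=B_l^\star$. Then the model $$\dot x=Ax+B_uu+S_{\eta}(\Theta_l^\star x+B_l^\star u)$$ is asymptotically stable (for $u=0$), i.e. $(A+S_\eta\Theta_l^\star)Q^\star+Q^\star(A+S_\eta\Theta_l^\star)^\top\prec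 0$ and hence $A+S_\eta\Theta_l^\star$ is Hurwitz. Moreover the cost $J=\sum_{i=1}^N e_i^\top e_i$ with $e_i:=\Theta_l^\star\hat x_i+B_l^\star u_i-\hat\eta_i$ satisfies $J\le\operatorname{tr}(W^\star)$.
   Context: Setting: one seeks a linear uncertainty model $\eta_l(x,u)=\Theta_lx+B_lu$ to augment the known linear model $\dot x=Ax+B_uu$ as $\dot x=Ax+B_uu+S_{\eta_l}\eta_l(x,u)$, fitted to data $(\hat x_i,u_i,\hat\eta_i)$ (estimates of state, input, and uncertainty) by the quadratic cost $J=\sum_i e_i^\top e_i=\sum_i d_i^\top T^\top T d_i=\operatorname{tr}(TDT^\top)$ with $T=[\Theta_l\ \ B_l\ \ -I]$, $e_i=Td_i$. The matrix $S_\eta$ indicates in which state equations the uncertainty enters in the true system $\dot x_s=Ax_s+B_uu+S_\eta\eta(x_s,u)+B_\omega\omega$. A matrix is Hurwitz if all its eigenvalues have negative real part; $\star$ denotes blocks determined by symmetry. *)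

(* Defs.v *)
From HB Require Import structures.
From mathcomp Require Import all_boot all_order all_algebra.
From mathcomp Require Import complex.
From mathcomp Require Import reals.
Set Implicit Arguments. Unset Strict Implicit. Unset Printing Implicit Defensive.
Import Order.TTheory GRing.Theory Num.Theory.
Local Open Scope ring_scope.

(* Eigenvalues of a real square matrix are the complex roots of its
   characteristic polynomial. A is Hurwitz iff all of them have negative
   real part. *)
Definition hurwitz (R : realType) (n : nat) (A : 'M[R]_n) : Prop :=
  forall z : R[i], root (map_poly (fun r : R => (r%:C)%C) (char_poly A)) z ->
    complex.Re z < 0.

Definition posdef (R : realType) (m : nat) (M : 'M[R]_m) : Prop :=
  M^T = M /\ forall x : 'cV[R]_m, x != 0 -> 0 < (x^T *m M *m x) 0 0.
Definition negdef (R : realType) (m : nat) (M : 'M[R]_m) : Prop :=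
  M^T = M /\ forall x : 'cV[R]_m, x != 0 -> (x^T *m M *m x) 0 0 < 0.

Definition dvec (R : realType) (n l ne : nat) (x : 'cV[R]_n) (u : 'cV[R]_l)
  (e : 'cV[R]_ne) : 'cV[R]_(n + l + ne) := col_mx (col_mx x u) e.

Definition Dmat (R : realType) (n l ne N : nat) (xh : 'I_N -> 'cV[R]_n)
  (u : 'I_N -> 'cV[R]_l) (eh : 'I_N -> 'cV[R]_ne) : 'M[R]_(n + l + ne) :=
  \sum_(i < N) (dvec (xh i) (u i) (eh i) *m (dvec (xh i) (u i) (eh i))^T).

Definition Tmat (R : realType) (n l ne : nat) (Th : 'M[R]_(ne, n))
  (Bl : 'M[R]_(ne, l)) : 'M[R]_(ne, n + l + ne) :=
  row_mx (row_mx Th Bl) (- (1%:M)).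

Definition feasible (R : realType) (n l ne : nat) (A : 'M[R]_n)
  (S : 'M[R]_(n, ne)) (gam : R) (D : 'M[R]_(n + l + ne))
  (Q : 'M[R]_n) (Th : 'M[R]_(ne, n)) (Bl : 'M[R]_(ne, l)) (W : 'M[R]_ne) : Prop :=
  [/\ Q^T = Q, W^T = W,
      negdef (block_mx (A *m Q + Q *m A^T) (S *m Th + gam *: Q)
                       (S *m Th + gam *: Q)^T (- (2 * gam) *: 1%:M)),
      \tr (Tmat Th Bl *m D *m (Tmat Th Bl)^T) <= \tr W
    & posdef Q].

Definition optimizer (R : realType) (n l ne : nat) (A : 'M[R]_n)
  (S : 'M[R]_(n, ne)) (gam : R) (D : 'M[R]_(n + l + ne))
  (Q : 'M[R]_n) (Th : 'M[R]_(ne, n)) (Bl : 'M[R]_(ne, l)) (W : 'M[R]_ne) : Prop :=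
  feasible A S gam D Q Th Bl W /\
  forall Q' Th' Bl' W', feasible A S gam D Q' Th' Bl' W' -> \tr W <= \tr W'.

(* Main.v *)
Require Import Defs.
From HB Require Import structures.
From mathcomp Require Import all_boot all_order all_algebra.
From mathcomp Require Import complex reals ring lra.
Import Order.TTheory GRing.Theory Num.Theory.
Local Open Scope ring_scope.

Lemma Re_sum (R : realType) (I : Type) (r : seq I) (P : pred I) (F : I -> R[i]) :
  complex.Re (\sum_(i <- r | P i) F i) = \sum_(i <- r | P i) complex.Re (F i).
Proof.
apply: (big_morph (@complex.Re R)) => [x y|//].
by case: x => ? ?; case: y.
Qed.

Lemma Re_quad (R : realType) (n : nat) (K : 'M[R]_n) (v : 'rV[R[i]]_n) :
  complex.Re ((v *m map_mx (real_complex R) K *m (map_mx conjc v)^T) 0 0) =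
  (map_mx (@complex.Re R) v *m K *m (map_mx (@complex.Re R) v)^T) 0 0 +
  (map_mx (@complex.Im R) v *m K *m (map_mx (@complex.Im R) v)^T) 0 0.
Proof.
rewrite !mxE Re_sum -big_split /=; apply: eq_bigr => j _.
rewrite !mxE !mulr_suml -big_split Re_sum; apply: eq_bigr => k _.
rewrite !mxE.
case: (v 0 k) => ak bk; case: (v 0 j) => aj bj /=.
ring.
Qed.

Lemma lyap (R : realType) (n : nat) (M P : 'M[R]_n) :
  posdef P -> negdef (M *m P + P *m M^T) -> hurwitz M.
Proof.
move=> [PT Ppos] [_ Nneg] z.
have -> : (fun r : R => (r%:C)%C) = real_complex R by [].
rewrite map_char_poly -eigenvalue_root_char => /eigenvalueP [v vM vnz].
set C := real_complex R.
set w := (map_mx conjc v)^T.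
set a := map_mx (@complex.Re R) v; set b := map_mx (@complex.Im R) v.
have ab : (a != 0) || (b != 0).
  rewrite -negb_and; apply/negP => /andP [/eqP a0 /eqP b0]; move/eqP: vnz; apply.
  apply/matrixP => i j; move/matrixP: a0 => /(_ i j); move/matrixP: b0 => /(_ i j).
  by rewrite !mxE; case: (v i j) => ? ? /= -> ->.
have qge (K : 'M[R]_n) : (forall x : 'cV[R]_n, x != 0 -> 0 < (x^T *m K *m x) 0 0) ->
    forall y : 'rV[R]_n, 0 <= (y *m K *m y^T) 0 0 /\ (y != 0 -> 0 < (y *m K *m y^T) 0 0).
  move=> HK y; have [->|y0] := eqVneq y 0.
    by rewrite mul0mx mul0mx mxE lexx; split => //; rewrite eqxx.
  have := HK y^T; rewrite trmxK trmx_eq0 => /(_ y0) h; split => //; exact: ltW.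
have qle (K : 'M[R]_n) : (forall x : 'cV[R]_n, x != 0 -> (x^T *m K *m x) 0 0 < 0) ->
    forall y : 'rV[R]_n, (y *m K *m y^T) 0 0 <= 0 /\ (y != 0 -> (y *m K *m y^T) 0 0 < 0).
  move=> HK y; have [->|y0] := eqVneq y 0.
    by rewrite mul0mx mul0mx mxE lexx; split => //; rewrite eqxx.
  have := HK y^T; rewrite trmxK trmx_eq0 => /(_ y0) h; split => //; exact: ltW.
have Pp : 0 < complex.Re ((v *m map_mx C P *m w) 0 0).
  rewrite Re_quad; have [a1 a2] := qge P Ppos a; have [b1 b2] := qge P Ppos b.
  by case/orP: ab => [/a2 h|/b2 h]; lra.
have Nn : complex.Re ((v *m map_mx C (M *m P + P *m M^T) *m w) 0 0) < 0.
  rewrite Re_quad; have [a1 a2] := qle _ Nneg a; have [b1 b2] := qle _ Nneg b.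
  by case/orP: ab => [/a2 h|/b2 h]; lra.
have wM : (map_mx C M)^T *m w = (conjc z) *: w.
  apply: trmx_inj; rewrite trmx_mul !trmxK linearZ /= trmxK.
  apply/matrixP => i j; rewrite !mxE.
  have := congr1 (fun m : 'rV[R[i]]_n => conjc (m i j)) vM; rewrite !mxE /= => h. transitivity ((z * v i j)^*%C); last by rewrite rmorphM. rewrite -h.
  rewrite rmorph_sum; apply: eq_bigr => k _; rewrite rmorphM /= !mxE.
  by rewrite conjc_real.
have E : (v *m map_mx C (M *m P + P *m M^T) *m w) 0 0 =
         (z + conjc z) * (v *m map_mx C P *m w) 0 0.
  rewrite map_mxD !map_mxM -map_trmx mulmxDr mulmxDl !mulmxA vM -!mulmxA wM.
  rewrite -scalemxAl -!scalemxAr !mxE mulrDl.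
  done.
move: Nn Pp; rewrite E; case: z {vM wM E} => x y.
set p := _ 0 0; case: p => pr pi /= h1 h2.
rewrite ltNge; apply/negP => hx; move: h1; apply/negP; rewrite -leNgt.
have -> : (x + x) * pr - (y - y) * pi = (x + x) * pr by ring.
by apply: mulr_ge0; [rewrite addr_ge0 | apply: ltW].
Qed.
Lemma part1 (R : realType) (n ne : nat) (A : 'M[R]_n) (S : 'M[R]_(n, ne)) (gam : R)
  (Q : 'M[R]_n) (Th : 'M[R]_(ne, n)) (x : 'cV[R]_n) :
  Q^T = Q ->
  (col_mx x (Q *m x))^T *m block_mx (A *m Q + Q *m A^T) (S *m Th + gam *: Q)
                       (S *m Th + gam *: Q)^T (- (2 * gam) *: 1%:M) *m col_mx x (Q *m x)
  = x^T *m ((A + S *m Th) *m Q + Q *m (A + S *m Th)^T) *m x.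
Proof.
move=> QT; rewrite tr_col_mx mul_row_block mul_row_col.
rewrite !trmx_mul QT !linearD /= !trmx_mul !linearZ /= QT.


rewrite mulmx1 !(mulmxDl, mulmxDr) !mulmxA -!scalemxAl ?mulmxA.
set a := x^T *m Q *m Q *m x. 
rewrite scaleNr mulr_natl mulr2n scalerDl. rewrite !addrA. move: (x^T *m A *m Q *m x) (x^T *m Q *m A^T *m x) (x^T *m Q *m Th^T *m S^T *m x) (x^T *m S *m Th *m Q *m x) => p q r s.
set g := gam *: a. rewrite opprD !addrA addrK. rewrite -(addrA _ g s) (addrC g s) addrA addrK. by rewrite -!addrA; congr (_ + _); rewrite [RHS]addrC addrA. Qed.

Lemma part3 (R : realType) (n l ne N : nat)
  (xh : 'I_N -> 'cV[R]_n) (u : 'I_N -> 'cV[R]_l) (eh : 'I_N -> 'cV[R]_ne)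
  (Th : 'M[R]_(ne, n)) (Bl : 'M[R]_(ne, l)) :
  \tr (Tmat Th Bl *m Dmat xh u eh *m (Tmat Th Bl)^T) =
  \sum_(i < N) (((Th *m xh i + Bl *m u i - eh i)^T
                     *m (Th *m xh i + Bl *m u i - eh i)) 0 0).
Proof.
rewrite /Dmat mulmx_sumr mulmx_suml raddf_sum; apply: eq_bigr => i _.
rewrite !mulmxA -mulmxA -trmx_mul. rewrite -trace_mx11 /= mxtrace_mulC.
have -> : Tmat Th Bl *m dvec (xh i) (u i) (eh i) = Th *m xh i + Bl *m u i - eh i.
  by rewrite /Tmat /dvec !mul_row_col mulNmx mul1mx.
done.
Qed.

Theorem theorem2 (R : realType) (n l ne N : nat)
  (A : 'M[R]_n) (Bu : 'M[R]_(n, l)) (S : 'M[R]_(n, ne)) (gam : R)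
  (xh : 'I_N -> 'cV[R]_n) (u : 'I_N -> 'cV[R]_l) (eh : 'I_N -> 'cV[R]_ne)
  (Q : 'M[R]_n) (Th : 'M[R]_(ne, n)) (Bl : 'M[R]_(ne, l)) (W : 'M[R]_ne) :
  hurwitz A -> 0 < gam ->
  optimizer A S gam (Dmat xh u eh) Q Th Bl W ->
  [/\ negdef ((A + S *m Th) *m Q + Q *m (A + S *m Th)^T),
      hurwitz (A + S *m Th)
    & \sum_(i < N) (((Th *m xh i + Bl *m u i - eh i)^T
                     *m (Th *m xh i + Bl *m u i - eh i)) 0 0) <= \tr W].
Proof.
move=> _ _ [[QT _ [_ Hneg] Htr Qpos] _].
have ND : negdef ((A + S *m Th) *m Q + Q *m (A + S *m Th)^T).
  split.
    by rewrite linearD /= !trmx_mul trmxK QT addrC.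
  move=> x x0; have := Hneg (col_mx x (Q *m x)).
  rewrite col_mx_eq0 negb_and x0 /= => /(_ isT).
  by rewrite (part1 _ _ _ A S gam Q Th x QT).
split => //; first exact: lyap Qpos ND.
by rewrite -part3.
Qed.
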